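(* Let $\Gamma$ be a closed web. Then $R(\Gamma)$ is nonempty, and for every edge $e$ of $\Gamma$ and every $L\in\mathbb{C}P(2)$ there is $\rho\in R(\Gamma)$ with $\rho(e)=L$.
   Context: A web is an oriented graph embedded in $S^2$ (circle components allowed) each of whose vertices is trivalent and is a source or a sink. $R(\Gamma)$ is the set of maps $\rho$ from the edges of $\Gamma$ to $\mathbb{C}P(2)$ (complex lines in $\mathbb{C}^3$) such that the three lines at every vertex are mutually Hermitian orthogonal. *)

(* Defs.v *)
From HB Require Import structures.
From mathcomp Require Import all_boot all_order all_algebra all_fingroup.
From mathcomp Require Import Rstruct.
From mathcomp.real_closed Require Import complex.
Set Implicit Arguments. Unset Strict Implicit. Unset Printing Implicit Defensive.
Import Order.TTheory GRing.Theory Num.Theory.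
Local Open Scope ring_scope.

Definition C : Type := (Rdefinitions.R)[i].

Definition hdot (u v : 'rV[C]_3) : C := \sum_(i < 3) u 0 i * (v 0 i)^*.

Definition CP2 := {U : {vspace 'rV[C]_3} | \dim U == 1%N}.

Definition horth (L M : CP2) : Prop :=
  forall u v : 'rV[C]_3, u \in val L -> v \in val M -> hdot u v = 0.

(** A (combinatorial) web, as an oriented combinatorial map:
    - [dart]  : half-edges, each attached to a vertex;
    - [circ]  : circle components (edges without vertices);
    - [vrot]  : rotation system: the cyclic order of half-edges around each
                vertex (vertices = orbits of [vrot]);
    - [einv]  : the involution pairing the two half-edges of an edge;
    - [out d] : true iff the edge of [d] is oriented away from the vertex of [d]. *)
Record web := Web {
  dart : finType;
  circ : finType;
  vrot : {perm dart};
  einv : {perm dart};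
  out  : dart -> bool
}.
Arguments vrot : clear implicits.
Arguments einv : clear implicits.
Arguments out : clear implicits.

Section WebDefs.
Variable W : web.

Definition wadj : rel (dart W) := fun x y => (y == vrot W x) || (y == einv W x).

Definition wcomp (d : dart W) : {set dart W} := [set y | connect wadj d y].

Definition nverts (K : {set dart W}) : nat :=
  #|[set O in porbits (vrot W) | O \subset K]|.
Definition nedges (K : {set dart W}) : nat := #|K| %/ 2.
Definition nfaces (K : {set dart W}) : nat :=
  #|[set O in porbits (vrot W * einv W)%g | O \subset K]|.

(** A closed web (no boundary) embedded in S^2:
    every vertex trivalent, every half-edge paired with another (no free ends),
    orientations consistent along edges, every vertex a source or a sink,
    and every connected component is a genus-0 map (Euler: V - E + F = 2),
    i.e. the rotation system is an embedding in the sphere. *)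
Definition closed_web : Prop :=
  [/\ forall d : dart W, #|porbit (vrot W) d| = 3%N,
      forall d : dart W, einv W (einv W d) = d /\ einv W d != d,
      forall d : dart W, out W (einv W d) = ~~ out W d,
      forall d : dart W, out W (vrot W d) = out W d &
      forall d : dart W,
        (nverts (wcomp d) + nfaces (wcomp d) = nedges (wcomp d) + 2)%N].

(** Edges: an edge through a half-edge [d] (the edge {d, einv d}), or a circle. *)
Definition edge := (dart W + circ W)%type.

(** A candidate map from edges to CP(2): a line for each half-edge (required
    to agree on the two halves of an edge) and one for each circle. *)
Definition coloring := ((dart W -> CP2) * (circ W -> CP2))%type.

Definition color (rho : coloring) (e : edge) : CP2 :=
  match e with inl d => rho.1 d | inr c => rho.2 c end.

Definition inR (rho : coloring) : Prop :=
  (forall d : dart W, rho.1 (einv W d) = rho.1 d) /\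
  (forall d d' : dart W, d' \in porbit (vrot W) d -> d' != d ->
     horth (rho.1 d) (rho.1 d')).

End WebDefs.

(* Main.v *)
Require Import Defs.
From HB Require Import structures.
From mathcomp Require Import all_boot all_order all_algebra all_fingroup.
From mathcomp Require Import Rstruct.
From mathcomp.real_closed Require Import complex.
From mathcomp Require Import ring.
From Stdlib Require Import Classical.
Set Implicit Arguments. Unset Strict Implicit. Unset Printing Implicit Defensive.
Import Order.TTheory GRing.Theory Num.Theory.
Section Comb.
Variable W : web.
Local Notation T := (dart W).
Local Notation s := (vrot W).
Local Notation e := (einv W).
Hypothesis Hrot3 : forall d : T, #|porbit s d| = 3%N.
Hypothesis Hinv : forall d : T, e (e d) = d /\ e d != d.
Hypothesis Hoe : forall d : T, out W (e d) = ~~ out W d.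
Hypothesis Hor : forall d : T, out W (s d) = out W d.

Definition sv (x y : T) := y \in porbit s x.

Lemma sv_refl x : sv x x. Proof. exact: porbit_id. Qed.
Lemma sv_sym x y : sv x y -> sv y x. Proof. by rewrite /sv porbit_sym. Qed.
Lemma sv_trans x y z : sv x y -> sv y z -> sv x z.
Proof.
rewrite /sv -!eq_porbit_mem => /eqP -> /eqP ->; done.
Qed.
Lemma eK x : e (e x) = x. Proof. by case: (Hinv x). Qed.
Lemma sv_out x y : sv x y -> out W y = out W x.
Proof.
move=> /porbitP [i ->]; rewrite permX; elim: i => //= i IH.
by rewrite Hor.
Qed.
Lemma sv_e x : ~~ sv x (e x).
Proof.
apply/negP=> /sv_out; rewrite Hoe; by case: (out W x).
Qed.

Definition col := option 'I_3.

Definition okc (c : T -> col) :=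
  (forall x, c (e x) = c x) /\
  (forall x y, sv x y -> y != x -> c x != None -> c y != c x).

Definition missing (c : T -> col) x (a : 'I_3) := forall y, sv x y -> c y != Some a.

Lemma exists_missing c x : c x = None -> exists a, missing c x a.
Proof.
move=> cx; apply: NNPP => H.
have H2 : forall a : 'I_3, exists y, sv x y /\ c y = Some a.
  move=> a; apply: NNPP => H3; apply: H; exists a => y sy; apply/eqP => cy.
  by apply: H3; exists y.
have : [set c y | y in porbit s x] = setT.
  apply/setP => k; rewrite inE; case: k => [a|].
    by case: (H2 a) => y [sy <-]; apply: imset_f.
  by rewrite -cx; apply: imset_f; apply: porbit_id.
move=> Heq; have H4 := congr1 (fun A : {set col} => #|A|) Heq.
move: H4 => /=; rewrite cardsT card_option card_ord => H4. have := leq_imset_card c (porbit s x).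
by rewrite H4 Hrot3.
Qed.

Lemma okc_uniq c x y z k : okc c -> sv x y -> sv x z -> c y = Some k -> c z = Some k -> y = z.
Proof.
move=> [_ Hp] sy sz cy cz; apply/eqP; apply: negbNE; apply/negP => nyz.
have syz : sv y z by apply: sv_trans (sv_sym sy) sz.
have := Hp y z syz; rewrite eq_sym nyz cy cz => /(_ isT isT); by rewrite eqxx.
Qed.

Section Swap.
Variables (c : T -> col) (d x0 : T) (a b : 'I_3).
Hypothesis okc_c : okc c.
Hypothesis cd : c d = None.
Hypothesis ma : missing c d a.
Hypothesis mb : missing c (e d) b.
Hypothesis sx0 : sv (e d) x0.
Hypothesis cx0 : c x0 = Some a.

Lemma ab_neq : a != b.
Proof. apply/eqP => ab; have := mb sx0; by rewrite cx0 ab eqxx. Qed.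

Definition ab z := (c z == Some a) || (c z == Some b).
Definition partner y := [pick z | sv y z && (z != y) && ab z].
Definition g x := if partner (e x) is Some z then z else x.
Definition P x := fconnect g x0 x || fconnect g x0 (e x).
Definition sw (k : col) := if k == Some a then Some b else if k == Some b then Some a else k.
Definition c' x := if P x then sw (c x) else c x.

Lemma fc_ind (Q : T -> Prop) : Q x0 -> (forall x, fconnect g x0 x -> Q x -> Q (g x)) ->
  forall x, fconnect g x0 x -> Q x.
Proof.
move=> Q0 QS x /iter_findex <-; elim: (findex _ _ _) => //= n IH.
by apply: QS => //; apply: fconnect_iter.
Qed.

Lemma other p q r : ab p -> ab q -> ab r -> c q != c p -> c r != c p -> c q = c r.
Proof.
rewrite /ab => /orP[] /eqP -> /orP[] /eqP -> /orP[] /eqP -> //; by rewrite eqxx.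
Qed.

Lemma g_spec x : g x = x \/ [/\ sv (e x) (g x), g x != e x & ab (g x)].
Proof.
rewrite /g /partner; case: pickP => [z /andP[/andP[H1 H2] H3]|_]; last by left.
by right.
Qed.

Lemma fc_ab x : fconnect g x0 x -> ab x.
Proof.
move: x; apply: (@fc_ind (fun x => ab x)); first by rewrite /ab cx0 eqxx.
move=> y _ Hy; case: (g_spec y) => [-> //|[] //].
Qed.

Lemma P_ab x : P x -> ab x.
Proof.
case/orP => [/fc_ab //| /fc_ab]; by rewrite /ab (proj1 okc_c).
Qed.

Lemma fc_par x : fconnect g x0 x -> (c x == Some a) = (out W x == out W x0).
Proof.
move: x; apply: (@fc_ind (fun x => (c x == Some a) = (out W x == out W x0))); first by rewrite cx0 !eqxx.
move=> y fy IH; case: (g_spec y) => [-> //|[H1 H2 H3]].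
have aby := fc_ab fy.
have Hn : c (g y) != c y.
  rewrite -(proj1 okc_c y); apply: (proj2 okc_c) => //.
  by rewrite (proj1 okc_c); move: aby; rewrite /ab; case: (c y).
have Hk : (c (g y) == Some a) = ~~ (c y == Some a).
  move: Hn H3 aby; rewrite /ab; have := ab_neq.
  move=> nab Hn' /orP[] /eqP E1 /orP[] /eqP E2; rewrite E1 E2 ?eqxx in Hn' * => //=.
    by rewrite (inj_eq Some_inj) ?(negbTE nab) eq_sym ?(negbTE nab).
  by rewrite (inj_eq Some_inj) ?(negbTE nab) eq_sym ?(negbTE nab).
rewrite (sv_out H1) Hoe Hk IH; by case: (out W y); case: (out W x0).
Qed.

Lemma ab_nN z : ab z -> c z != None.
Proof. by rewrite /ab; case: (c z). Qed.

Lemma neq_col x y : sv x y -> y != x -> ab x -> c y != c x.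
Proof. move=> sxy nyx /ab_nN; exact: (proj2 okc_c). Qed.

Lemma ab_e z : ab (e z) = ab z.
Proof. by rewrite /ab (proj1 okc_c). Qed.

Lemma same_other p q r : sv p q -> sv p r -> q != p -> r != p -> ab p -> ab q -> ab r -> q = r.
Proof.
move=> spq spr nqp nrp abp abq abr.
have E := other abp abq abr (neq_col spq nqp abp) (neq_col spr nrp abp).
move: (abq); rewrite /ab => /orP[] /eqP Ek; apply: (okc_uniq okc_c spq spr Ek); by rewrite -E.
Qed.

Lemma P_closed x z : P x -> sv x z -> z != x -> ab z -> P z.
Proof.
case/orP => [fx|fex].
  move: x fx z; apply: (@fc_ind (fun x => forall z, sv x z -> z != x -> ab z -> P z)).
    move=> z sz nz abz; exfalso.
    have h1 := mb (sv_trans sx0 sz).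
    have h2 := neq_col sz nz (introT orP (or_introl (introT eqP cx0))).
    by move: abz h1 h2; rewrite /ab cx0 => /orP[] /eqP ->; rewrite eqxx.
  move=> y fy IH; case: (g_spec y) => [-> //|[H1 H2 H3]] z sz nz abz.
  have abey : ab (e y) by rewrite ab_e; exact: fc_ab.
  have sge : sv (g y) (e y) by apply: sv_sym.
  have -> : z = e y by apply: (same_other sz sge nz _ H3 abz abey); rewrite eq_sym.
  by rewrite /P eK fy orbT.
move=> sz nz abz.
have abx : ab x by rewrite -ab_e; exact: fc_ab.
have Hg : g (e x) = z.
  rewrite /g eK /partner; case: pickP => [w /andP[/andP[H1 H2] H3]|/(_ z)].
    exact: (same_other H1 sz H2 nz abx H3 abz).
  by rewrite sz nz abz.
by rewrite /P -Hg (connect_trans fex (fconnect1 _ _)).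
Qed.

Lemma notP_d w : sv d w -> ~~ P w.
Proof.
move=> hw; apply/negP => Pw.
have abw := P_ab Pw.
have cwb : c w = Some b.
  by move: abw (ma hw); rewrite /ab => /orP[] /eqP ->; rewrite ?eqxx.
have ow : out W w = ~~ out W x0.
  by rewrite (sv_out hw) (sv_out sx0) Hoe negbK.
case/orP: Pw => [fw|few].
  move: w fw hw cwb {abw ow}.
  apply: (@fc_ind (fun w => sv d w -> c w = Some b -> False)).
    by rewrite cx0 => _ [/eqP]; rewrite (negbTE ab_neq).
  move=> y fy IH; case: (g_spec y) => [-> //|[H1 H2 H3]] hw cwb.
  have abey : ab (e y) by rewrite ab_e; exact: fc_ab.
  have Hn := neq_col H1 H2 abey.
  have : c (e y) = Some a.
    by move: abey Hn; rewrite /ab cwb => /orP[] /eqP ->; rewrite ?eqxx.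
  apply/eqP; apply: ma; apply: sv_trans hw _; exact: sv_sym.
have := fc_par few; rewrite (proj1 okc_c) cwb Hoe ow.
rewrite (inj_eq Some_inj) eq_sym (negbTE ab_neq).
by case: (out W x0).
Qed.

Lemma sw_inv k : sw (sw k) = k.
Proof.
rewrite /sw; have nab := ab_neq; have nba : b != a by rewrite eq_sym.
case: (eqVneq k (Some a)) => [->|ka].
  by rewrite ?eqxx ?(inj_eq Some_inj) ?(negbTE nba) ?(negbTE nab) ?eqxx.
case: (eqVneq k (Some b)) => [->|kb].
  by rewrite ?eqxx ?(inj_eq Some_inj) ?(negbTE nba) ?(negbTE nab) ?eqxx.
by rewrite ?(negbTE ka) ?(negbTE kb).
Qed.

Lemma sw_ab k : (k == Some a) || (k == Some b) -> (sw k == Some a) || (sw k == Some b).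
Proof.
rewrite /sw => /orP[] /eqP ->; rewrite eqxx ?eqxx ?orbT //.
by case: ifP => _; rewrite eqxx ?orbT.
Qed.

Lemma swN k : (sw k == None) = (k == None).
Proof. by rewrite /sw; case: (eqVneq k (Some a)) => [->|_] //; case: (eqVneq k (Some b)) => [->|_]. Qed.

Lemma P_e x : P (e x) = P x.
Proof. by rewrite /P eK orbC. Qed.

Lemma ab_ne k l : (k == Some a) || (k == Some b) -> ~~ ((l == Some a) || (l == Some b)) -> k != l.
Proof. by move=> hk; apply: contraNneq => <-. Qed.

Lemma okc_c' : okc c'.
Proof.
split.
  by move=> x; rewrite /c' P_e (proj1 okc_c).
move=> x y sxy nyx; rewrite /c'.
case: (boolP (P x)) => Px; case: (boolP (P y)) => Py.
- move=> Hx; apply/negP => /eqP E.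
  have := congr1 sw E; rewrite !sw_inv => /eqP.
  apply/negP; apply: (proj2 okc_c) => //; by move: Hx; rewrite swN.
- move=> _; have : ~~ ab y by apply/negP => aby; rewrite (P_closed Px sxy nyx aby) in Py.
  move=> H; rewrite eq_sym; exact: (ab_ne (sw_ab (P_ab Px)) H).
- move=> _; have : ~~ ab x.
    have nxy : x != y by rewrite eq_sym.
    by apply/negP => abx; rewrite (P_closed Py (sv_sym sxy) nxy abx) in Px.
  move=> H; exact: (ab_ne (sw_ab (P_ab Py)) H).
- exact: (proj2 okc_c).
Qed.

Lemma c'N x : (c' x == None) = (c x == None).
Proof. by rewrite /c'; case: ifP => // _; rewrite swN. Qed.

Lemma miss_c'_d : missing c' d a.
Proof. by move=> w hw; rewrite /c' (negbTE (notP_d hw)); apply: ma. Qed.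

Lemma Px0 : P x0.
Proof. by rewrite /P connect0. Qed.

Lemma miss_c'_ed : missing c' (e d) a.
Proof.
move=> w hw; rewrite /c'.
have ux : forall z, sv (e d) z -> c z = Some a -> z = x0.
  move=> z sz cz; exact: (okc_uniq okc_c sz sx0 cz cx0).
case: ifP => Pw.
  have abw := P_ab Pw.
  have cwa : c w = Some a.
    by move: abw (mb hw); rewrite /ab => /orP[] /eqP -> //; rewrite eqxx.
  rewrite cwa /sw eqxx (inj_eq Some_inj) eq_sym; exact: ab_neq.
apply/eqP => cw; have := ux w hw cw => E; by rewrite E Px0 in Pw.
Qed.
End Swap.

Lemma e_inj : injective e. Proof. exact: perm_inj. Qed.

Lemma fill c d a : okc c -> missing c d a -> missing c (e d) a ->
  okc (fun x => if (x == d) || (x == e d) then Some a else c x).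
Proof.
move=> [He Hp] ma mb; split.
  move=> x; have -> : ((e x == d) || (e x == e d)) = ((x == d) || (x == e d)).
    by rewrite -{1}(eK d) !(inj_eq e_inj) orbC.
  by case: ifP => // _; rewrite He.
move=> x y sxy nyx.
case: (boolP ((x == d) || (x == e d))) => Hx; case: (boolP ((y == d) || (y == e d))) => Hy.
- exfalso; move: Hx Hy nyx sxy => /orP[] /eqP -> /orP[] /eqP -> //; rewrite ?eqxx //.
    move=> _ H; by move: (sv_e d); rewrite H.
  move=> _ H; by move: (sv_e (e d)); rewrite eK H.
- move=> _; move: Hx => /orP[] /eqP E; subst x.
    by apply: ma.
  by apply: mb.
- move=> _; rewrite eq_sym; move: Hy => /orP[] /eqP E; subst y.
    by apply: ma; apply: sv_sym.
  by apply: mb; apply: sv_sym.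
- exact: Hp.
Qed.

Lemma step c d : okc c -> c d = None -> exists c2, okc c2 /\
   (forall x, c2 x = None -> c x = None) /\ c2 d != None.
Proof.
move=> okc_c cd.
have [a ma] := exists_missing cd.
have ced : c (e d) = None by rewrite (proj1 okc_c).
have [b mb] := exists_missing ced.
have [c1 [ok1 [N1 [ma1 mb1]]]] : exists c1, okc c1 /\ (forall x, c1 x = None -> c x = None)
   /\ missing c1 d a /\ missing c1 (e d) a.
  case: (boolP [exists y, sv (e d) y && (c y == Some a)]).
    move=> /existsP [x0 /andP [sx0 /eqP cx0]].
    exists (c' c x0 a b); split; first exact: (okc_c' (d:=d)).
    split; first by move=> x /eqP; rewrite c'N => /eqP.
    split; [exact: miss_c'_d | exact: miss_c'_ed].
  move=> /existsPn H; exists c; split => //; split => //; split => //.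
  by move=> y sy; move: (H y); rewrite sy.
exists (fun x => if (x == d) || (x == e d) then Some a else c1 x); split.
  exact: fill.
split; last by rewrite eqxx.
by move=> x; case: ifP => // _ /N1.
Qed.

Lemma total_col : exists f : T -> 'I_3, (forall x, f (e x) = f x) /\
   (forall x y, sv x y -> y != x -> f y != f x).
Proof.
suff H : forall n (c : T -> col), okc c -> #|[set x | c x == None]| <= n ->
   exists f : T -> 'I_3, (forall x, f (e x) = f x) /\
   (forall x y, sv x y -> y != x -> f y != f x).
  apply: (H _ (fun _ => None)) => //; split => // x y _ _; by rewrite eqxx.
elim=> [|n IH] c okc_c Hn.
  have Hc : forall x, c x != None.
    move=> x; apply/negP => /eqP cx.
    have : x \in [set x | c x == None] by rewrite inE cx.
    by move: Hn; rewrite leqn0 cards_eq0 => /eqP ->; rewrite inE.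
  exists (fun x => odflt ord0 (c x)); split.
    by move=> x /=; rewrite (proj1 okc_c).
  move=> x y sxy nyx /=; have := (proj2 okc_c) x y sxy nyx (Hc x).
  by move: (Hc x) (Hc y); case: (c x); case: (c y).
case: (boolP [exists d, c d == None]); last first.
  move=> /existsPn Hc; apply: (IH c okc_c).
  suff -> : [set x | c x == None] = set0 by rewrite cards0.
  by apply/setP => x; rewrite !inE (negbTE (Hc x)).
move=> /existsP [d /eqP cd].
have [c2 [ok2 [N2 d2]]] := step okc_c cd.
apply: (IH c2 ok2); rewrite -ltnS; apply: leq_trans Hn.
apply: proper_card; apply/properP; split.
  by apply/subsetP => x; rewrite !inE => /eqP /N2 ->.
by exists d; rewrite !inE ?cd // (negbTE d2).
Qed.

Lemma total_col0 d0 : exists f : T -> 'I_3, (forall x, f (e x) = f x) /\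
   (forall x y, sv x y -> y != x -> f y != f x) /\ f d0 = ord0.
Proof.
have [f [H1 H2]] := total_col.
exists (fun x => tperm (f d0) ord0 (f x)); split; first by move=> x; rewrite H1.
split; last by rewrite tpermL.
by move=> x y sxy nyx; rewrite (inj_eq perm_inj); apply: H2.
Qed.
End Comb.

Local Open Scope ring_scope.
Definition mkv (a b c : C) : 'rV[C]_3 := \row_(j < 3) [:: a; b; c]`_j.

Lemma hdot3 (x y : 'rV[C]_3) : hdot x y =
  x 0 0 * (y 0 0)^* + x 0 1 * (y 0 1)^* + x 0 2%:R * (y 0 2%:R)^*.
Proof.
rewrite /hdot !big_ord_recl big_ord0 addr0 addrA.
congr (_ + _ * _ + _ * _); do ?apply: congr1; exact/val_inj.
Qed.

Lemma mkvE a b c : [/\ mkv a b c 0 0 = a, mkv a b c 0 1 = b & mkv a b c 0 2%:R = c].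
Proof. by rewrite !mxE. Qed.

Lemma hdotZ x y k m : hdot (k *: x) (m *: y) = k * m^* * hdot x y.
Proof.
rewrite /hdot mulr_sumr; apply: eq_bigr => i _; rewrite !mxE rmorphM /=.
by rewrite mulrACA.
Qed.

Lemma hdotC0 x y : hdot x y = 0 -> hdot y x = 0.
Proof.
move=> H; have -> : hdot y x = (hdot x y)^*; last by rewrite H rmorph0.
rewrite /hdot rmorph_sum; apply: eq_bigr => i _.
by rewrite rmorphM /= conjCK mulrC.
Qed.

Lemma mkv_neq0 a b c : (a != 0) || (b != 0) || (c != 0) -> mkv a b c != 0.
Proof.
move=> H; apply/eqP => E; have [E1 E2 E3] := mkvE a b c.
rewrite E !mxE in E1 E2 E3.
by move: H; rewrite -E1 -E2 -E3 eqxx.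
Qed.

Lemma orth_complete (v : 'rV[C]_3) : v != 0 -> exists u w, [/\ u != 0, w != 0,
   hdot v u = 0, hdot v w = 0 & hdot u w = 0].
Proof.
move=> nv.
set p := v 0 0; set q := v 0 1; set r := v 0 2%:R.
case: (boolP ((p != 0) || (q != 0))) => Hpq.
  exists (mkv (- q^*) (p^*) 0), (mkv (- r^* * p) (- r^* * q) (p * p^* + q * q^*)).
  split.
  - apply: mkv_neq0; move: Hpq => /orP[] H; rewrite ?oppr_eq0 ?conjC_eq0 ?oppr_eq0 ?conjC_eq0 H ?orbT //.
  - apply: mkv_neq0; apply/orP; right.
    rewrite -!normCK; apply/negP => /eqP /eqP.
    rewrite paddr_eq0 ?exprn_ge0 // !expf_eq0 /= !normr_eq0 => /andP[/eqP hp /eqP hq].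
    by move: Hpq; rewrite hp hq eqxx.
  - rewrite hdot3 !mxE /=; rewrite -/p -/q -/r.
    rewrite ?(rmorphN, rmorphD, rmorphM, rmorph0) /= ?conjCK; ring.
  - rewrite hdot3 !mxE /=; rewrite -/p -/q -/r.
    rewrite ?(rmorphN, rmorphD, rmorphM, rmorph0) /= ?conjCK; ring.
  - rewrite hdot3 !mxE /=.
    rewrite ?(rmorphN, rmorphD, rmorphM, rmorph0) /= ?conjCK; ring.
exists (mkv 1 0 0), (mkv 0 1 0); split.
- by apply: mkv_neq0; rewrite oner_eq0.
- by apply: mkv_neq0; rewrite oner_eq0 orbT.
- move: Hpq; rewrite negb_or !negbK => /andP[/eqP hp /eqP hq].
  rewrite hdot3 !mxE /=; rewrite -/p -/q -/r hp hq rmorph0; ring.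
- move: Hpq; rewrite negb_or !negbK => /andP[/eqP hp /eqP hq].
  rewrite hdot3 !mxE /=; rewrite -/p -/q -/r hp hq rmorph0; ring.
- rewrite hdot3 !mxE /=; rewrite rmorph0; ring.
Qed.

Lemma line_gen (L : CP2) : exists2 v, v != 0 & val L = <[v]>%VS.
Proof.
case: L => U /= dU; exists (vpick U).
  by rewrite vpick0; apply/negP => /eqP U0; move: dU; rewrite U0 dimv0.
apply/eqP; rewrite eq_sym eqEdim dim_vline (eqP dU).
have nz : vpick U != 0.
  by rewrite vpick0; apply/negP => /eqP U0; move: dU; rewrite U0 dimv0.
by rewrite nz -memvE memv_pick.
Qed.

Lemma horth_lines (A B : CP2) x y : val A = <[x]>%VS -> val B = <[y]>%VS ->
  hdot x y = 0 -> horth A B.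
Proof.
move=> hA hB h u w; rewrite hA hB => /vlineP[k ->] /vlineP[m ->].
by rewrite hdotZ h mulr0.
Qed.

Lemma dim_line1 (u : 'rV[C]_3) : u != 0 -> \dim <[u]> == 1%N.
Proof. by move=> nu; rewrite dim_vline nu. Qed.

Definition mkline (u : 'rV[C]_3) (nu : u != 0) : CP2 :=
  exist (fun U : {vspace 'rV[C]_3} => \dim U == 1%N) <[u]>%VS (dim_line1 nu).

Lemma frame (L : CP2) : exists F : 'I_3 -> CP2, F ord0 = L /\
  forall i j : 'I_3, i != j -> horth (F i) (F j).
Proof.
have [v nv hv] := line_gen L.
have [u [w [nu nw hvu hvw huw]]] := orth_complete nv.
pose L2 := mkline nu; pose L3 := mkline nw.
exists (fun i : 'I_3 => match val i with 0 => L | 1 => L2 | _ => L3 end); split => //.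
have hu : val L2 = <[u]>%VS by [].
have hw : val L3 = <[w]>%VS by [].
have huv := hdotC0 hvu; have hwv := hdotC0 hvw; have hwu := hdotC0 huw.
case=> [[|[|[|i]]] Hi] // [[|[|[|j]]] Hj] //= _; by apply: horth_lines; eauto.
Qed.

Lemma inR_of (W : web) (f : dart W -> 'I_3) (F : 'I_3 -> CP2) g :
  (forall x, f (einv W x) = f x) ->
  (forall x y, sv x y -> y != x -> f y != f x) ->
  (forall i j, i != j -> horth (F i) (F j)) ->
  inR ((fun d => F (f d)), g).
Proof.
move=> h1 h2 h3; split => /= [d|d d' hd nd]; first by rewrite h1.
apply: h3; rewrite eq_sym; exact: h2.
Qed.

Theorem mainTheorem13 (W : web) (HW : closed_web W) :
  (exists rho : coloring W, inR rho) /\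
  (forall (e : edge W) (L : CP2),
     exists rho : coloring W, inR rho /\ color rho e = L).
Proof.
case: HW => H1 H2 H3 H4 _.
have Hmain : forall (e : edge W) (L : CP2),
     exists rho : coloring W, inR rho /\ color rho e = L.
  move=> e L; have [F [F0 HF]] := frame L.
  case: e => [d0|c0].
    have [f [f1 [f2 f3]]] := total_col0 H1 H2 H3 H4 d0.
    exists ((fun d => F (f d)), (fun _ => L)); split; first exact: inR_of.
    by rewrite /= f3.
  have [f [f1 f2]] := total_col H1 H2 H3 H4.
  exists ((fun d => F (f d)), (fun _ => L)); split; first exact: inR_of.
  by [].
split => //.
have nz : mkv 1 0 0 != 0 by apply: mkv_neq0; rewrite oner_eq0.
have [f [f1 f2]] := total_col H1 H2 H3 H4.
have [F [_ HF]] := frame (mkline nz).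
exists ((fun d => F (f d)), (fun _ => mkline nz)); exact: inR_of.
Qed.
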